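(* Let $n,m,N$ be positive integers, $p_1,\ldots,p_N,q_1,\ldots,q_N,g_1,\ldots,g_m\in\mathbb{R}[\mathbf{x}]$ with $\mathbf{x}=(x_1,\ldots,x_n)$, $\mathbf{K}=\{\mathbf{x}\in\mathbb{R}^n\mid g_j(\mathbf{x})\ge0,\ j\in[m]\}$, and assume $\mathbf{K}$ is compact and $q_i>0$ on $\mathbf{K}$ for all $i\in[N]$. Let $\rho=\inf_{\mathbf{x}\in\mathbf{K}}\sum_{i=1}^Np_i(\mathbf{x})/q_i(\mathbf{x})$. With $\mathcal{A}_i$ as in the context, let \[ \rho^{\mathrm{s}}=\sup\Big\{c\ \Big|\ c\in\mathbb{R},\ h_i\in\mathbb{R}[\overline{\mathcal{A}_i}]\ (i=2,\ldots,N),\ \frac{p_1(\mathbf{x})}{q_1(\mathbf{x})}+\sum_{i=2}^Nh_i(\mathbf{x})\ge c\ \text{and}\ \frac{p_i(\mathbf{x})}{q_i(\mathbf{x})}\ge h_i(\mathbf{x})\ (i=2,\ldots,N)\ \text{for all }\mathbf{x}\in\mathbf{K}\Big\}. \] Then $\rho^{\mathrm{s}}=\rho$.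
   Context: $\operatorname{supp}(f)$ is the set of exponents of monomials with nonzero coefficient in $f$. For $i\in\{2,\ldots,N\}$, $\mathcal{A}_i=\operatorname{supp}(p_i)\cup\operatorname{supp}(q_i)\cup\bigcup_{j=1}^m\operatorname{supp}(g_j)$. For finite $\mathcal{A}\subseteq\mathbb{N}^n$, $\mathcal{R}(\mathcal{A})=\{\mathbf{r}\in\{0,1\}^n\mid \mathbf{r}^\intercal\boldsymbol{\alpha}\equiv0\ (\mathrm{mod}\ 2)\ \forall\boldsymbol{\alpha}\in\mathcal{A}\}$ and $\overline{\mathcal{A}}=\{\boldsymbol{\alpha}\in\mathbb{N}^n\mid\mathbf{r}^\intercal\boldsymbol{\alpha}\equiv0\ (\mathrm{mod}\ 2)\ \forall\mathbf{r}\in\mathcal{R}(\mathcal{A})\}$. $\mathbb{R}[\overline{\mathcal{A}}]$ is the set of polynomials whose support is contained in $\overline{\mathcal{A}}$. *)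

(* Defs.v *)
From HB Require Import structures.
From mathcomp Require Import all_boot all_order all_algebra.
From mathcomp Require Import mpoly.
Set Implicit Arguments. Unset Strict Implicit. Unset Printing Implicit Defensive.
Import Order.TTheory GRing.Theory Num.Theory.
Local Open Scope ring_scope.

Notation rpoly R n := (mpoly n R).
Notation expo n := (multinom n).

Definition supp (R : realDomainType) (n : nat) (f : rpoly R n) : seq (expo n) :=
  msupp f.

Definition ev (R : realDomainType) (n : nat) (f : rpoly R n) (x : 'rV[R]_n) : R :=
  f.@[fun i => x ord0 i].

Definition even_pair (n : nat) (r : 'I_n -> bool) (a : expo n) : bool :=
  ~~ odd (\sum_(i < n) (r i : nat) * a i)%N.

Definition in_RA (n : nat) (A : seq (expo n)) (r : 'I_n -> bool) : Prop :=
  forall a : expo n, a \in A -> even_pair r a.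

Definition in_Abar (n : nat) (A : seq (expo n)) (a : expo n) : Prop :=
  forall r : 'I_n -> bool, in_RA A r -> even_pair r a.

Definition in_RAbar (R : realDomainType) (n : nat) (A : seq (expo n)) (f : rpoly R n)
  : Prop :=
  forall a : expo n, a \in supp f -> in_Abar A a.

Definition Aset (R : realDomainType) (n m : nat) (pi qi : rpoly R n)
  (g : 'I_m -> rpoly R n) : seq (expo n) :=
  supp pi ++ supp qi ++ flatten [seq supp (g j) | j <- enum 'I_m].

Definition Kset (R : realDomainType) (n m : nat) (g : 'I_m -> rpoly R n)
  : 'rV[R]_n -> Prop :=
  fun x => forall j, 0 <= ev (g j) x.

(* Main.v *)
Require Import Defs.
From HB Require Import structures.
From mathcomp Require Import all_boot all_order all_algebra.
From mathcomp Require Import all_classical all_reals all_analysis.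
From mathcomp Require mpoly.
From mathcomp Require Import ring lra.
Import Order.TTheory GRing.Theory Num.Theory.
Import numFieldTopology.Exports numFieldNormedType.Exports.
Local Open Scope classical_set_scope.
Local Open Scope ring_scope.
Import (canonicals, coercions) mpoly.
Set Implicit Arguments. Unset Strict Implicit. Unset Printing Implicit Defensive.
Section Supp.
Variables (R : realType) (n : nat) (A : seq (expo n)).

Lemma even_pair0 r : even_pair r (@mpoly.mnm0 n).
Proof. by rewrite /even_pair big1 // => i _; rewrite mpoly.mnm0E muln0. Qed.

Lemma even_pairD r (a b : expo n) : even_pair r a -> even_pair r b ->
  even_pair r (@mpoly.mnm_add n a b).
Proof.
rewrite /even_pair => ha hb.
rewrite (eq_bigr (fun i => (r i : nat) * a i + (r i : nat) * b i)%N); last first.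
  by move=> i _; rewrite mpoly.mnmDE mulnDr.
by rewrite big_split /= oddD (negbTE ha) (negbTE hb).
Qed.

Lemma in_Abar0 : in_Abar A (@mpoly.mnm0 n).
Proof. by move=> r _; exact: even_pair0. Qed.

Lemma in_AbarD (a b : expo n) : in_Abar A a -> in_Abar A b -> in_Abar A (@mpoly.mnm_add n a b).
Proof. by move=> ha hb r hr; apply: even_pairD; [exact: ha|exact: hb]. Qed.

Lemma in_Abar_mem (a : expo n) : a \in A -> in_Abar A a.
Proof. by move=> ha r hr; exact: hr. Qed.

Implicit Types f h : rpoly R n.

Lemma in_RAbar1 : in_RAbar A (1 : rpoly R n).
Proof.
move=> a; rewrite /supp mpoly.msupp1 inE => /eqP ->; exact: in_Abar0.
Qed.

Lemma in_RAbarZ c f : in_RAbar A f -> in_RAbar A (c *: f).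
Proof. by move=> hf a /mpoly.msuppZ_le; exact: hf. Qed.

Lemma in_RAbarC c : in_RAbar A (c *: (1 : rpoly R n)).
Proof. exact/in_RAbarZ/in_RAbar1. Qed.

Lemma in_RAbarD f h : in_RAbar A f -> in_RAbar A h -> in_RAbar A (f + h).
Proof.
by move=> hf hh a /mpoly.msuppD_le; rewrite mem_cat => /orP[/hf|/hh].
Qed.

Lemma in_RAbarB f h : in_RAbar A f -> in_RAbar A h -> in_RAbar A (f - h).
Proof.
by move=> hf hh a /mpoly.msuppB_le; rewrite mem_cat => /orP[/hf|/hh].
Qed.

Lemma in_RAbarM f h : in_RAbar A f -> in_RAbar A h -> in_RAbar A (f * h).
Proof.
move=> hf hh a /mpoly.msuppM_le /allpairsP [[a1 a2] /= [h1 h2 ->]].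
by apply: in_AbarD; [exact: hf|exact: hh].
Qed.

Lemma in_RAbarX f k : in_RAbar A f -> in_RAbar A (f ^+ k).
Proof.
move=> hf; elim: k => [|k ih]; first by rewrite expr0; exact: in_RAbar1.
by rewrite exprS; apply: in_RAbarM.
Qed.

Lemma in_RAbar0 : in_RAbar A (0 : rpoly R n).
Proof. by rewrite -(scale0r (1 : rpoly R n)); exact: in_RAbarC. Qed.

Lemma in_RAbar_sum (I : Type) (s : seq I) (F : I -> rpoly R n) :
  (forall i, in_RAbar A (F i)) -> in_RAbar A (\sum_(i <- s) F i).
Proof.
move=> hF; elim: s => [|i s ih]; first by rewrite big_nil; exact: in_RAbar0.
by rewrite big_cons; apply: in_RAbarD.
Qed.

Lemma in_RAbar_supp f : {subset supp f <= A} -> in_RAbar A f.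
Proof. by move=> hs a /hs; exact: in_Abar_mem. Qed.

End Supp.

Section Ev.
Variables (R : realType) (n : nat).
Implicit Types f h : rpoly R n.

Lemma evD f h x : ev (f + h) x = ev f x + ev h x.
Proof. exact: mpoly.mevalD. Qed.
Lemma evB f h x : ev (f - h) x = ev f x - ev h x.
Proof. exact: mpoly.mevalB. Qed.
Lemma evM f h x : ev (f * h) x = ev f x * ev h x.
Proof. exact: mpoly.mevalM. Qed.
Lemma evZ c f x : ev (c *: f) x = c * ev f x.
Proof. exact: mpoly.mevalZ. Qed.
Lemma ev1 x : ev (1 : rpoly R n) x = 1.
Proof. exact: mpoly.meval1. Qed.
Lemma evX f k x : ev (f ^+ k) x = ev f x ^+ k.
Proof. by rewrite /ev rmorphXn. Qed.
Lemma ev_sum (I : Type) (s : seq I) (F : I -> rpoly R n) x :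
  ev (\sum_(i <- s) F i) x = \sum_(i <- s) ev (F i) x.
Proof. by rewrite /ev rmorph_sum. Qed.

Lemma cont_sum (I : Type) (s : seq I) (F : I -> 'rV[R]_n -> R) :
  (forall i, continuous (F i)) -> continuous (fun x => \sum_(i <- s) F i x).
Proof.
move=> hF; elim: s => [|i s ih].
  have -> : (fun x : 'rV[R]_n => \sum_(i <- [::]) F i x) = fun=> 0.
    by apply: funext => x; rewrite big_nil.
  exact: cst_continuous.
have -> : (fun x : 'rV[R]_n => \sum_(j <- i :: s) F j x) =
   (F i + (fun x => \sum_(j <- s) F j x)).
  by apply: funext => x; rewrite big_cons.
by move=> x; apply: continuousD; [exact: hF|exact: ih].
Qed.

Lemma cont_prod (I : Type) (s : seq I) (F : I -> 'rV[R]_n -> R) :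
  (forall i, continuous (F i)) -> continuous (fun x => \prod_(i <- s) F i x).
Proof.
move=> hF; elim: s => [|i s ih].
  have -> : (fun x : 'rV[R]_n => \prod_(i <- [::]) F i x) = fun=> 1.
    by apply: funext => x; rewrite big_nil.
  exact: cst_continuous.
have -> : (fun x : 'rV[R]_n => \prod_(j <- i :: s) F j x) =
   (F i \* (fun x => \prod_(j <- s) F j x)).
  by apply: funext => x; rewrite big_cons.
by move=> x; apply: continuousM; [exact: hF|exact: ih].
Qed.

Lemma cont_exp k (F : 'rV[R]_n -> R) :
  continuous F -> continuous (fun x => F x ^+ k).
Proof.
move=> hF; elim: k => [|k ih].
  have -> : (fun x : 'rV[R]_n => F x ^+ 0) = fun=> 1 by apply: funext => x.
  exact: cst_continuous.
have -> : (fun x : 'rV[R]_n => F x ^+ k.+1) = F \* (fun x => F x ^+ k).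
  by apply: funext => x; rewrite exprS.
by move=> x; apply: continuousM; [exact: hF|exact: ih].
Qed.

Lemma ev_cont f : continuous (ev f).
Proof.
have -> : ev f = fun x => \sum_(m <- mpoly.msupp f)
    mpoly.mcoeff m f * \prod_(i < n) (x ord0 i) ^+ (m i).
  by apply: funext => x; rewrite /ev mpoly.mevalE.
apply: cont_sum => m.
have -> : (fun x : 'rV[R]_n => mpoly.mcoeff m f * \prod_(i < n) (x ord0 i) ^+ (m i))
  = (fun=> mpoly.mcoeff m f) \* (fun x => \prod_(i < n) (x ord0 i) ^+ (m i)) by [].
move=> x; apply: continuousM; first exact: cst_continuous.
apply: cont_prod => i.
apply: cont_exp; exact: (@coord_continuous R 1 n ord0 i).
Qed.
End Ev.
Section Approx.
Variables (R : realType) (n m : nat) (g : 'I_m -> rpoly R n).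
Hypothesis hK : compact (Kset g : set 'rV[R]_n).

Lemma evN (f : rpoly R n) x : ev (- f) x = - ev f x.
Proof. exact: mpoly.mevalN. Qed.

Lemma bound_max (f : rpoly R n) : exists P : R, forall x, Kset g x -> ev f x <= P.
Proof.
have [[x0 Kx0]|K0] := pselect (Kset g !=set0).
- have [c _ hc] := compact_EVT_max (ex_intro _ x0 Kx0) hK
     (continuous_subspaceT (@ev_cont _ _ f)).
  by exists (ev f c) => x Kx; apply: hc; exact/mem_set.
- by exists 0 => x Kx; exfalso; apply: K0; exists x.
Qed.

Lemma bound_min_pos (q : rpoly R n) : (forall x, Kset g x -> 0 < ev q x) ->
  exists2 a : R, 0 < a & forall x, Kset g x -> a <= ev q x.
Proof.
move=> hq.
have [[x0 Kx0]|K0] := pselect (Kset g !=set0).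
- have [c cK hc] := compact_EVT_min (ex_intro _ x0 Kx0) hK
     (continuous_subspaceT (@ev_cont _ _ q)).
  exists (ev q c); first by apply: hq; move: cK; rewrite inE.
  by move=> x Kx; apply: hc; exact/mem_set.
- by exists 1 => // x Kx; exfalso; apply: K0; exists x.
Qed.

Lemma geo_small (th eps : R) : 0 <= th < 1 -> 0 < eps ->
  exists M : nat, th ^+ M <= eps.
Proof.
case/andP => th0 th1 eps0.
have hth : `|th| < 1 by rewrite ger0_norm.
have := @cvgr0_norm_le _ _ _ _ _ (fun k : nat => th ^+ k) (cvg_expr hth) _ eps0.
case => M _ HM.
exists M; apply: le_trans (HM M (leqnn M)); exact: ler_norm.
Qed.
End Approx.
Section Approx2.
Variables (R : realType) (n m : nat) (g : 'I_m -> rpoly R n).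
Hypothesis hK : compact (Kset g : set 'rV[R]_n).

Lemma approx (p q : rpoly R n) (hq : forall x, Kset g x -> 0 < ev q x) (e : R) :
  0 < e -> exists h : rpoly R n, in_RAbar (Aset p q g) h /\
   forall x, Kset g x -> ev h x <= ev p x / ev q x /\ ev p x / ev q x - ev h x <= e.
Proof.
move=> e0.
have [a a0 ha] := bound_min_pos hK hq.
have [b0 hb0] := bound_max hK q.
pose b := Num.max b0 a.
have ab : a <= b by rewrite le_max lexx orbT.
have bpos : 0 < b by exact: lt_le_trans a0 ab.
have hb : forall x, Kset g x -> ev q x <= b.
  by move=> x Kx; rewrite le_max hb0.
have [P1 hP1] := bound_max hK p.
have [P2 hP2] := bound_max hK (- p).
pose P := `|P1| + `|P2|.
have P0 : 0 <= P by rewrite addr_ge0.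
have hP : forall x, Kset g x -> `|ev p x| <= P.
  move=> x Kx; rewrite ler_norml; apply/andP; split.
  - have := hP2 x Kx; rewrite evN.
    have := ler_norm P2; have := normr_ge0 P1; rewrite /P; lra.
  - have := hP1 x Kx.
    have := ler_norm P1; have := normr_ge0 P2; rewrite /P; lra.
pose th := 1 - a / b.
have hth : 0 <= th < 1.
  apply/andP; split.
  - by rewrite subr_ge0 ler_pdivrMr // mul1r.
  - by rewrite ltrBlDr ltrDl divr_gt0.
pose d := e / 2.
have d0 : 0 < d by rewrite divr_gt0.
have ed : e = d + d by rewrite /d -splitr.
pose eps := d * a / (P + 1).
have eps0 : 0 < eps by rewrite /eps !divr_gt0 // ?mulr_gt0 //; lra.
have [M hM] := geo_small hth eps0.
pose S := \sum_(k < M) (1 - b^-1 *: q) ^+ k.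
exists (b^-1 *: (p * S) - d *: 1); split.
  have hp' : in_RAbar (Aset p q g) p.
    by apply: in_RAbar_supp => z hz; rewrite /Aset mem_cat hz.
  have hq' : in_RAbar (Aset p q g) q.
    by apply: in_RAbar_supp => z hz; rewrite /Aset !mem_cat hz orbT.
  apply: in_RAbarB; last exact: in_RAbarC.
  apply/in_RAbarZ/in_RAbarM => //; apply: in_RAbar_sum => k.
  by apply/in_RAbarX/in_RAbarB; [exact: in_RAbar1|exact: in_RAbarZ].
move=> x Kx.
have qx0 : 0 < ev q x by exact: hq.
pose t := 1 - b^-1 * ev q x.
have t0 : 0 <= t.
  by rewrite subr_ge0 mulrC ler_pdivrMr // mul1r hb.
have tth : t <= th.
  by rewrite /t /th lerD2l lerN2 mulrC ler_pM2l ?invr_gt0 // ha.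
pose T := \sum_(k < M) t ^+ k.
have evh : ev (b^-1 *: (p * S) - d *: 1) x = b^-1 * (ev p x * T) - d.
  rewrite evB !evZ ev1 mulr1 evM ev_sum /T; congr (_ * (_ * _) - _).
  by apply: eq_bigr => k _; rewrite evX evB ev1 evZ.
have hT : (1 - t) * T = 1 - t ^+ M.
  have := subrX1 t M; rewrite -/T => h1.
  by rewrite -[1 - t]opprB mulNr -h1 opprB.
have evh2 : ev (b^-1 *: (p * S) - d *: 1) x
    = ev p x / ev q x - ev p x * t ^+ M / ev q x - d.
  rewrite evh; congr (_ - _).
  have qn0 : ev q x != 0 by rewrite gt_eqF.
  have bn0 : b != 0 by rewrite gt_eqF.
  have -> : t ^+ M = 1 - (1 - t) * T by rewrite hT; ring.
  rewrite /t; field; exact/andP.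
set X := ev p x * t ^+ M / ev q x.
have hX : `|X| <= d.
  rewrite /X normrM normfV (ger0_norm (ltW qx0)) normrM (ger0_norm (exprn_ge0 _ t0)).
  rewrite ler_pdivrMr //.
  have htM : t ^+ M <= eps.
    apply: le_trans hM; apply: lerXn2r => //; rewrite nnegrE //; exact: le_trans tth.
  apply: (le_trans (y := P * eps)).
    by apply: ler_pM => //; [exact: exprn_ge0|exact: hP].
  have -> : P * eps = d * a * (P / (P + 1)) by rewrite /eps; field; lra.
  have : P / (P + 1) <= 1 by rewrite ler_pdivrMr ?mul1r; lra.
  have := ha x Kx.
  have : 0 <= P / (P + 1) by rewrite divr_ge0 //; lra.
  move=> h1 h2 h3.
  apply: (le_trans (y := d * a)); first by rewrite ler_piMr // mulr_ge0 //; lra.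
  by rewrite ler_pM2l.
move: hX; rewrite ler_norml => /andP[h1 h2].
rewrite evh2 -/X; move: X h1 h2 => X h1 h2; split; lra.
Qed.
End Approx2.
Unset Implicit Arguments.

Theorem theorem4p3 (R : realType) (n m N : nat)
    (hn : (0 < n)%N) (hm : (0 < m)%N) (hN : (0 < N)%N)
    (p q : 'I_N -> rpoly R n) (g : 'I_m -> rpoly R n)
    (hK : compact (Kset g : set 'rV[R]_n))
    (hq : forall (i : 'I_N) (x : 'rV[R]_n), Kset g x -> 0 < ev (q i) x) :
  let i1 : 'I_N := Ordinal hN in
  let rho := ereal_inf
    [set (\sum_(i < N) ev (p i) x / ev (q i) x)%:E | x in (Kset g : set 'rV[R]_n)] in
  let rho_s := ereal_sup
    [set c%:E | c in [set c : R | exists h : 'I_N -> rpoly R n,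
        (forall i : 'I_N, i != i1 -> in_RAbar (Aset (p i) (q i) g) (h i)) /\
        (forall x : 'rV[R]_n, Kset g x ->
           c <= ev (p i1) x / ev (q i1) x + \sum_(i < N | i != i1) ev (h i) x /\
           (forall i : 'I_N, i != i1 -> ev (h i) x <= ev (p i) x / ev (q i) x))]] in
  rho_s = rho.
Proof.
move=> i1 rho rho_s.
have feas : forall c : R,
    (forall x, Kset g x -> c <= \sum_(i < N) ev (p i) x / ev (q i) x) ->
    forall e, 0 < e -> ((c - e)%:E <= rho_s)%E.
  move=> c hc e e0.
  pose e' := e / N%:R.
  have N0 : (0 : R) < N%:R by rewrite ltr0n.
  have e'0 : 0 < e' by rewrite divr_gt0.
  have : forall i : 'I_N, exists h, in_RAbar (Aset (p i) (q i) g) h /\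
      forall x, Kset g x -> ev h x <= ev (p i) x / ev (q i) x /\
                ev (p i) x / ev (q i) x - ev h x <= e'.
    by move=> i; exact: (approx hK (p i) (hq i) e'0).
  case/boolp.choice => h hh.
  apply: ereal_sup_ubound; exists (c - e); last by [].
  exists h; split; first by move=> i _; exact: (hh i).1.
  move=> x Kx; split; last by move=> i _; exact: ((hh i).2 x Kx).1.
  have := hc x Kx; rewrite (bigD1 i1) //=.
  have hsum : \sum_(i < N | i != i1) ev (p i) x / ev (q i) x
      - \sum_(i < N | i != i1) ev (h i) x <= e.
    rewrite -sumrB.
    apply: (le_trans (y := \sum_(i < N | i != i1) e')).
      by apply: ler_sum => i _; exact: ((hh i).2 x Kx).2.
    have h3 : \sum_(i < N) e' = e' + \sum_(i < N | i != i1) e' by rewrite (bigD1 i1).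
    have h4 : \sum_(i < N) e' = e.
      by rewrite sumr_const card_ord -mulr_natr /e' divfK // gt_eqF.
    move: h3; rewrite h4; move: e'0; lra.
  move: hsum; lra.
have le1 : (rho_s <= rho)%E.
  apply: ge_ereal_sup => _ [c [h [hsupp hh]] <-].
  apply: le_ereal_inf_tmp => _ [x Kx <-].
  rewrite lee_fin (bigD1 i1) //=.
  have [h1 h2] := hh x Kx.
  apply: (le_trans h1); rewrite lerD2l; apply: ler_sum => i hi; exact: h2.
have lbK : forall x, Kset g x ->
    (rho <= (\sum_(i < N) ev (p i) x / ev (q i) x)%:E)%E.
  by move=> x Kx; apply: ereal_inf_lbound; exists x.
have le2 : (rho <= rho_s)%E.
  case E: rho => [r| |].
  - apply/lee_subgt0Pr => e e0; apply: feas => // x Kx.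
    by rewrite -lee_fin -E; exact: lbK.
  - suff -> : rho_s = +oo%E by [].
    apply: eq_infty => r; rewrite -(addrK 1 r); apply: feas => // x Kx.
    by have := lbK x Kx; rewrite E.
  - exact: leNye.
by apply: le_anti; rewrite le1 le2.
Qed.
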